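(* Let $A=(a_{ik})$ be a real symmetric $n\times n$ matrix whose induced signed graph $\Gamma=(T,\sigma)$, $T=(V,E)$, has no cycle. Let $\lambda$ be an eigenvalue of $A$ with multiplicity $r$ and let $f:V\to\mathbb R$ be an eigenfunction for $\lambda$. Let $\mathcal F=\{x\in V: f(x)=0\text{ and }f(y)=0\text{ for all }y\sim x\}$, and let $\tilde r$ be the multiplicity of $\lambda$ as an eigenvalue of the matrix $\widetilde A$ obtained from $A$ by deleting all rows and columns with indices in $\mathcal F$. Then $$r\ge\tilde r=e_0-2z+c+|\mathcal F|,$$ where $z=|\{x\in V: f(x)=0\}|$, $e_0=|\{\{x,y\}\in E: f(x)=0\text{ or }f(y)=0\}|$, and $c$ is the number of connected components of $T$.
   Context: The induced signed graph of a real symmetric $n\times n$ matrix $A$ has vertex set $V=\{x_1,\dots,x_n\}$ (identified with indices), edge $\{x_i,x_j\}$ iff $i\ne j$ and $a_{ij}\ne0$, and sign $-a_{ij}/|a_{ij}|$. Eigenfunctions are nonzero eigenvectors viewed as functions on $V$; $y\sim x$ means $\{x,y\}\in E$. *)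

(* Defs.v *)
From HB Require Import structures.
From mathcomp Require Import all_boot all_order all_algebra.
Set Implicit Arguments. Unset Strict Implicit. Unset Printing Implicit Defensive.
Import Order.TTheory GRing.Theory Num.Theory.
Local Open Scope ring_scope.

(* Underlying (unsigned) graph T of the induced signed graph of A:
   vertices 'I_n, edge {i,j} iff i != j and A i j != 0. *)
Definition mx_adj (R : ringType) (n : nat) (A : 'M[R]_n) : rel 'I_n :=
  fun i j => (i != j) && (A i j != 0).

Definition mx_acyclic (R : ringType) (n : nat) (A : 'M[R]_n) : Prop :=
  forall s : seq 'I_n, uniq s -> (3 <= size s)%N -> ~~ cycle (mx_adj A) s.

Definition eig_mult (R : fieldType) (m : nat) (B : 'M[R]_m) (lam : R) : nat :=
  mup lam (char_poly B).

Definition zero_nbhd_set (R : ringType) (n : nat) (A : 'M[R]_n) (f : 'cV[R]_n)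
  : {set 'I_n} :=
  [set x | (f x 0 == 0) && [forall y, mx_adj A x y ==> (f y 0 == 0)]].

Definition del_rowcol (R : ringType) (n : nat) (A : 'M[R]_n) (S : {set 'I_n})
  : 'M[R]_#|~: S| :=
  \matrix_(i, j) A (enum_val i) (enum_val j).

Definition zero_count (R : ringType) (n : nat) (f : 'cV[R]_n) : nat :=
  #|[set x | f x 0 == 0]|.

Definition zero_edge_count (R : ringType) (n : nat) (A : 'M[R]_n) (f : 'cV[R]_n)
  : nat :=
  #|[set p : 'I_n * 'I_n | [&& (p.1 < p.2)%N, mx_adj A p.1 p.2 &
                                (f p.1 0 == 0) || (f p.2 0 == 0)]]|.

Definition comp_count (R : ringType) (n : nat) (A : 'M[R]_n) : nat :=
  n_comp (mx_adj A) predT.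

(* Main.v *)
Require Import Defs.
From HB Require Import structures.
From mathcomp Require Import all_boot all_order all_algebra zify ring lra.
Import Order.TTheory GRing.Theory Num.Theory.
Local Open Scope ring_scope.
Set Implicit Arguments. Unset Strict Implicit. Unset Printing Implicit Defensive.

Section Es.
Variables (R : fieldType) (n : nat).

Definition Es (S : {set 'I_n}) : 'M[R]_(#|S|, n) :=
  \matrix_(k, i) (enum_val k == i)%:R.

Lemma mulEt S (v : 'rV[R]_n) k : (v *m (Es S)^T) 0 k = v 0 (enum_val k).
Proof.
rewrite mxE (bigD1 (enum_val k)) //= big1 => [|i ne]; rewrite !mxE.
  by rewrite eqxx mulr1 addr0.
by rewrite eq_sym (negbTE ne) mulr0.
Qed.

Lemma sum_enum_val S (F : 'I_n -> R) :
  \sum_(k < #|S|) F (enum_val k) = \sum_(x in S) F x.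
Proof. by rewrite (big_enum_val (A := mem S)). Qed.

Lemma mulEtE S (v : 'rV[R]_n) i :
  (v *m (Es S)^T *m Es S) 0 i = if i \in S then v 0 i else 0.
Proof.
rewrite mxE (eq_bigr (fun k => (fun x => v 0 x * (x == i)%:R) (enum_val k))).
  rewrite (sum_enum_val S (fun x => v 0 x * (x == i)%:R)); case: ifP => iS.
    rewrite (bigD1 i) //= eqxx mulr1 big1 ?addr0 // => x /andP[_ /negbTE ->].
    by rewrite mulr0.
  by rewrite big1 // => x xS; case: eqP => [e|]; [rewrite e iS in xS | rewrite mulr0].
by move=> k _; rewrite mulEt mxE.
Qed.

Lemma Es_supp S (h : 'rV[R]_n) :
  (h <= Es S)%MS = [forall i, (i \notin S) ==> (h 0 i == 0)].
Proof.
apply/idP/forallP.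
  move/submxP=> [D ->] i; apply/implyP=> iS; rewrite mxE big1 // => k _.
  rewrite mxE; case: eqP => [e|]; last by rewrite mulr0.
  by have := enum_valP k; rewrite e (negbTE iS).
move=> H; apply/submxP; exists (h *m (Es S)^T); apply/rowP => i.
rewrite mulEtE; case: ifP => // iS.
by have /implyP/(_ (negbT iS))/eqP := H i.
Qed.

Lemma Et_eq0 S (v : 'rV[R]_n) :
  (v *m (Es S)^T == 0) = [forall u, (u \in S) ==> (v 0 u == 0)].
Proof.
apply/eqP/forallP => [H u|H].
  apply/implyP => uS; move/rowP: H => /(_ (enum_rank_in uS u)).
  by rewrite mulEt enum_rankK_in // mxE => ->.
apply/rowP => k; rewrite mulEt mxE.
by have /implyP/(_ (enum_valP k))/eqP := H (enum_val k).
Qed.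

Lemma EEt S : Es S *m (Es S)^T = 1%:M.
Proof.
apply/matrixP => k l; rewrite mxE (bigD1 (enum_val k)) //= big1 => [|i ne].
  rewrite !mxE eqxx mul1r addr0 (inj_eq enum_val_inj) eq_sym.
  by case: (l == k).
by rewrite !mxE eq_sym (negbTE ne) mul0r.
Qed.

Lemma Es_free S : row_free (Es S).
Proof.
rewrite /row_free eqn_leq rank_leq_row /=.
by have := mxrankM_maxl (Es S) (Es S)^T; rewrite EEt mxrank1.
Qed.

Lemma rank_Es S : \rank (Es S) = #|S|.
Proof. by apply/eqP; exact: Es_free. Qed.

End Es.
Section L1.
Variable R : realFieldType.

Lemma char_poly_conj m (P B : 'M[R]_m) : P \in unitmx ->
  char_poly (P *m B *m invmx P) = char_poly B.
Proof.
move=> uP.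
set P' := map_mx (@polyC R) P.
set Q' := map_mx (@polyC R) (invmx P).
have ePQ : P' *m Q' = 1%:M by rewrite -map_mxM mulmxV // map_mx1.
have eQP : Q' *m P' = 1%:M by rewrite -map_mxM mulVmx // map_mx1.
rewrite /char_poly.
have -> : char_poly_mx (P *m B *m invmx P) = P' *m char_poly_mx B *m Q'.
  rewrite /char_poly_mx !map_mxM mulmxBr mulmxBl -/P' -/Q'.
  by have -> : P' *m 'X%:M *m Q' = 'X%:M by rewrite scalar_mxC -mulmxA ePQ mulmx1.
by rewrite !det_mulmx mulrC mulrA -det_mulmx eQP det1 mul1r.
Qed.

Lemma char_poly_castmx m1 m2 (E : m1 = m2) (B : 'M[R]_m1) :
  char_poly (castmx (E, E) B) = char_poly B.
Proof. by case: m2 / E; rewrite castmx_id. Qed.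

Lemma sym_ker_cap m (N : 'M[R]_m) : N^T = N -> (kermx N :&: N = 0)%MS.
Proof.
move=> NT; apply/eqP; rewrite -submx0; apply/rV_subP => x.
rewrite sub_capmx => /andP[]; rewrite sub_kermx => /eqP xN0 /submxP[y xE].
have h : x *m x^T = 0.
  by rewrite {2}xE trmx_mul NT mulmxA xN0 mul0mx.
have hs : \sum_i x 0 i ^+ 2 = 0.
  have -> : \sum_i x 0 i ^+ 2 = (x *m x^T) 0 0.
    by rewrite mxE; apply: eq_bigr => i _; rewrite mxE expr2.
  by rewrite h mxE.
rewrite submx0; apply/eqP; apply/rowP => i; rewrite mxE.
apply/eqP; rewrite -sqrf_eq0; apply/eqP.
by apply: (psumr_eq0P (P := xpredT) (F := fun i => x 0 i ^+ 2)) => // j _; rewrite sqr_ge0.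
Qed.


Lemma L1core d e (B : 'M[R]_(d + e)) lam : B^T = B ->
  \rank (kermx (B - lam%:M)) = d -> mup lam (char_poly B) = d.
Proof.
move=> BT rk.
set N := B - lam%:M.
have NT : N^T = N by rewrite /N linearB /= BT tr_scalar_mx.
have rN : \rank N = e.
  have h : (d + e - \rank N)%N = d by rewrite -mxrank_ker. 
  by have := rank_leq_row N; lia.
set Kb : 'M_(d, d + e) := castmx (rk, erefl) (row_base (kermx N)).
set Wb : 'M_(e, d + e) := castmx (rN, erefl) (row_base N).
have eK : (Kb :=: kermx N)%MS := eqmx_trans (eqmx_cast _ _) (eq_row_base _).
have eW : (Wb :=: N)%MS := eqmx_trans (eqmx_cast _ _) (eq_row_base _).
have KN : Kb *m N = 0 by apply/eqP; rewrite -sub_kermx eK.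
have sWN : (Wb <= N)%MS by rewrite eW.
have WN : (Wb *m N <= Wb)%MS by rewrite eW submxMl.
set C := Wb *m N *m pinvmx Wb.
have eC : C *m Wb = Wb *m N by rewrite mulmxKpV.
set P := col_mx Kb Wb.
have rK : \rank Kb = d by rewrite eK.
have rW : \rank Wb = e by rewrite eW.
have rP : \rank P = (d + e)%N.
  have -> : \rank P = \rank (Kb + Wb)%MS by rewrite /P addsmxE.
  have := mxrank_sum_cap Kb Wb.
  rewrite (cap_eqmx eK eW) sym_ker_cap // mxrank0 rK rW; lia.
have uP : P \in unitmx by rewrite -row_free_unit /row_free rP.
have PN : P *m N = block_mx 0 0 0 C *m P.
  by rewrite mul_col_mx mul_block_col KN eC !mul0mx !add0r.
have PB : P *m B *m invmx P = block_mx (lam%:M) 0 0 (C + lam%:M).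
  have -> : B = N + lam%:M by rewrite /N subrK.
  rewrite mulmxDr PN mul_mx_scalar -mul_scalar_mx -mulmxDl mulmxK //.
  by rewrite (scalar_mx_block d e lam) add_block_mx !addr0 add0r.
rewrite -(char_poly_conj B uP) PB /char_poly char_block_diag_mx det_ublock.
rewrite -/(char_poly (lam%:M : 'M_d)) -/(char_poly (C + lam%:M)).
rewrite char_poly_trig ?scalar_mx_is_trig //.
under eq_bigr => i _ do rewrite mxE eqxx mulr1n.
rewrite prodr_const card_ord.
rewrite mupM ?expf_neq0 ?polyXsubC_eq0 ?monic_neq0 ?char_poly_monic //.
rewrite mup_XsubCX eqxx mupNroot ?addn0 //.
rewrite -eigenvalue_root_char /eigenvalue negbK.
rewrite -submx0; apply/rV_subP => v; rewrite /eigenspace sub_kermx addrK => /eqP vC.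
have : (v *m Wb <= kermx N :&: N)%MS.
  rewrite sub_capmx sub_kermx -mulmxA -eC mulmxA vC mul0mx eqxx /=.
  exact: submx_trans (submxMl _ _) sWN.
by rewrite sym_ker_cap // submx0 mulmx_free_eq0 ?submx0 // /row_free rW.
Qed.

Lemma L1core' m d e (B : 'M[R]_m) lam : m = (d + e)%N -> B^T = B ->
  \rank (kermx (B - lam%:M)) = d -> mup lam (char_poly B) = d.
Proof. move=> E; subst m; exact: L1core. Qed.

Lemma eig_mult_sym m (B : 'M[R]_m) lam : B^T = B ->
  eig_mult B lam = \rank (kermx (B - lam%:M)).
Proof.
move=> BT; rewrite /eig_mult.
have hd : (\rank (kermx (B - lam%:M)) <= m)%N by apply: rank_leq_row.
by apply: (L1core' (e := (m - \rank (kermx (B - lam%:M)))%N)) => //; rewrite subnKC.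
Qed.

End L1.

Section Main.
Variables (R : realFieldType) (n : nat) (A : 'M[R]_n) (lam : R).
Hypothesis AT : A^T = A.

Definition M := A - lam%:M.

Lemma MT : M^T = M.
Proof. by rewrite /M linearB /= AT tr_scalar_mx. Qed.

Lemma Msym i j : M i j = M j i.
Proof. by rewrite -{1}MT mxE. Qed.

Lemma MA i j : i != j -> M i j = A i j.
Proof. by move=> ij; rewrite /M !mxE (negbTE ij) mulr0n subr0. Qed.

Lemma adjE i j : mx_adj A i j = (i != j) && (M i j != 0).
Proof. by rewrite /mx_adj; case: (eqVneq i j) => [->|ij] //=; rewrite MA. Qed.

Lemma adj_sym : symmetric (mx_adj A).
Proof. by move=> i j; rewrite !adjE eq_sym Msym. Qed.

Definition KS (S : {set 'I_n}) := (Es R S :&: kermx (M *m (Es R S)^T))%MS.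

Lemma KSP S (h : 'rV[R]_n) : (h <= KS S)%MS =
  [forall i, (i \notin S) ==> (h 0 i == 0)] &&
  [forall u, (u \in S) ==> ((h *m M) 0 u == 0)].
Proof. by rewrite sub_capmx Es_supp sub_kermx mulmxA Et_eq0. Qed.

Lemma KS_supp (S : {set 'I_n}) (h : 'rV[R]_n) : (h <= KS S)%MS -> forall i, i \notin S -> h 0 i = 0.
Proof. by rewrite KSP => /andP[/forallP H _] i iS; apply/eqP; have /implyP := H i; apply. Qed.

Lemma KS_ker (S : {set 'I_n}) (h : 'rV[R]_n) : (h <= KS S)%MS -> forall u, u \in S -> (h *m M) 0 u = 0.
Proof. by rewrite KSP => /andP[_ /forallP H] i iS; apply/eqP; have /implyP := H i; apply. Qed.

Lemma KS_intro (S : {set 'I_n}) (h : 'rV[R]_n) : (forall i, i \notin S -> h 0 i = 0) ->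
  (forall u, u \in S -> (h *m M) 0 u = 0) -> (h <= KS S)%MS.
Proof.
move=> H1 H2; rewrite KSP; apply/andP; split; apply/forallP => i; apply/implyP.
  by move/H1 => ->.
by move/H2 => ->.
Qed.

Lemma parter (S : {set 'I_n}) x (w : 'rV[R]_n) : x \in S ->
  (forall i, i \notin S :\ x -> w 0 i = 0) ->
  (forall u, u \in S :\ x -> (w *m M) 0 u = 0) ->
  (w *m M) 0 x != 0 ->
  \rank (KS (S :\ x)) = (\rank (KS S)).+1.
Proof.
move=> xS w1 w2 w3.
set c : 'cV[R]_n := \col_i (i == x)%:R.
have hc (v : 'rV[R]_n) : (v *m M *m c) 0 0 = (v *m M) 0 x.
  rewrite mxE (bigD1 x) //= big1 => [|i ix]; rewrite !mxE ?eqxx ?mulr1 ?addr0 //.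
  by rewrite (negbTE ix) mulr0.
have key (h : 'rV[R]_n) : (h <= KS S)%MS -> h 0 x = 0.
  move=> hK.
  have e1 : (h *m M *m w^T) 0 0 = 0.
    rewrite mxE big1 // => i _; rewrite [w^T _ _]mxE.
    case: (boolP (i \in S :\ x)) => iS.
      by rewrite (KS_ker hK) ?mul0r //; move: iS; rewrite in_setD1 => /andP[].
    by rewrite w1 ?mulr0.
  have e2 : (h *m M *m w^T) 0 0 = h 0 x * (w *m M) 0 x.
    rewrite -mulmxA -{1}MT -trmx_mul mxE (bigD1 x) //= big1 ?addr0 ?mxE // => i ix.
    rewrite mxE; case: (boolP (i \in S)) => iS.
      by rewrite w2 ?mulr0 // in_setD1 ix.
    by rewrite (KS_supp hK) ?mul0r.
  by move: e1; rewrite e2 => /eqP; rewrite mulf_eq0 (negbTE w3) orbF => /eqP.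
have eq : (KS S :=: KS (S :\ x) :&: kermx (M *m c))%MS.
  apply/eqmxP/andP; split; apply/rV_subP => h.
    move=> hK; rewrite sub_capmx sub_kermx; apply/andP; split.
      apply: KS_intro => [i|u].
        rewrite in_setD1 negb_and negbK => /orP[/eqP ->|]; first exact: key.
        exact: KS_supp.
      by rewrite in_setD1 => /andP[_]; apply: KS_ker.
    by apply/eqP/rowP => j; rewrite [j]ord1 mulmxA hc (KS_ker hK) // mxE.
  rewrite sub_capmx sub_kermx => /andP[hK /eqP hc0].
  apply: KS_intro => [i iS|u uS].
    by apply: (KS_supp hK); rewrite in_setD1 negb_and iS orbT.
  case: (eqVneq u x) => [->|ux].
    by move/matrixP: hc0 => /(_ 0 0); rewrite mulmxA hc => ->; rewrite mxE.
  by apply: (KS_ker hK); rewrite in_setD1 ux.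
rewrite eq.
have := mxrank_mul_ker (KS (S :\ x)) (M *m c).
have wK : (w <= KS (S :\ x))%MS by apply: KS_intro.
have r1 : \rank (KS (S :\ x) *m (M *m c)) = 1%N.
  apply/eqP; rewrite eqn_leq rank_leq_col lt0n mxrank_eq0 /=.
  apply/eqP => H; move: w3; rewrite -hc -mulmxA.
  by move/submxP: wK => [D ->]; rewrite -mulmxA H mulmx0 mxE eqxx.
by rewrite r1 add1n => <-.
Qed.

End Main.

Section Branch.
Variables (R : realFieldType) (n : nat) (A : 'M[R]_n) (lam : R).
Hypothesis AT : A^T = A.
Hypothesis acyc : mx_acyclic A.
Variable g : 'rV[R]_n.
Hypothesis gM : g *m M A lam = 0.

Local Notation M := (M A lam).
Local Notation adj := (mx_adj A).
Let adjE := @adjE R n A lam.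
Let Msym := @Msym R n A lam AT.

Lemma gM0 u : \sum_i g 0 i * M i u = 0.
Proof. by move/matrixP: gM => /(_ 0 u); rewrite !mxE. Qed.

Lemma branch (S : {set 'I_n}) x y :
  (forall i, i \notin S -> g 0 i = 0) -> x \in S -> y \in S -> adj x y ->
  g 0 x = 0 -> g 0 y != 0 ->
  exists w : 'rV[R]_n, [/\ (forall i, i \notin S :\ x -> w 0 i = 0),
     (forall u, u \in S :\ x -> (w *m M) 0 u = 0) & (w *m M) 0 x != 0].
Proof.
move=> gS xS yS axy gx gy.
set S' := S :\ x.
set e' : rel 'I_n := fun a b => [&& adj a b, a \in S' & b \in S'].
set B := [set v | connect e' y v].
set w : 'rV[R]_n := \row_i (if i \in B then g 0 i else 0).
have xy : x != y by move: axy; rewrite adjE => /andP[].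
have yS' : y \in S' by rewrite in_setD1 eq_sym xy.
have pS a p : path e' a p -> all (fun v => v \in S') p.
  elim: p a => //= b p IH a /andP[/and3P[_ _ bS] pp]; rewrite bS /=; exact: IH pp.
have BS' v : v \in B -> v \in S'.
  rewrite inE => /connectP[p pp ->].
  case: (lastP p) pp => [//|q z] pp; rewrite last_rcons.
  by have /allP := pS _ _ pp; apply; rewrite mem_rcons mem_head.
have BE v : (v \in B) = connect e' y v by rewrite inE.
have yB : y \in B by rewrite inE connect0.
exists w; split.
- move=> i iS; rewrite mxE; case: ifP => // /BS' iS'.
  by rewrite iS' in iS.
- move=> u uS; rewrite mxE.
  case: (boolP (u \in B)) => uB.
    transitivity (\sum_i g 0 i * M i u); last exact: gM0.
    apply: eq_bigr => i _; rewrite mxE.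
    case: ifP => // iB.
    case: (eqVneq (g 0 i) 0) => [->|gi]; first by rewrite !mul0r.
    have iS : i \in S by apply: contraNT gi => /gS ->; rewrite eqxx.
    have ix : i != x by apply/eqP => e; move: gi; rewrite e gx eqxx.
    have iS' : i \in S' by rewrite in_setD1 ix.
    case: (eqVneq (M i u) 0) => [->|Miu]; first by rewrite !mulr0.
    have ui : u != i by apply/eqP => e; move: iB; rewrite -e uB.
    have : connect e' y i.
      apply: connect_trans (_ : connect e' u i).
        by move: uB; rewrite inE.
      by apply: connect1; rewrite /e' uS iS' adjE ui Msym Miu.
    by rewrite -BE iB.
  rewrite big1 // => i _; rewrite mxE; case: ifP => iB; last by rewrite mul0r.
  case: (eqVneq (M i u) 0) => [->|Miu]; first by rewrite mulr0.
  have iu : i != u by apply/eqP => e; move: uB; rewrite -e iB.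
  have : connect e' y u.
    apply: connect_trans (_ : connect e' i u).
      by move: iB; rewrite inE.
    by apply: connect1; rewrite /e' uS BS' // adjE iu Miu.
  by rewrite -BE (negbTE uB).
- rewrite mxE (bigD1 y) //= big1 ?addr0.
    rewrite mxE yB mulf_neq0 //.
    by move: axy; rewrite adjE Msym => /andP[].
  move=> i iy; rewrite mxE; case: ifP => iB; last by rewrite mul0r.
  case: (eqVneq (M i x) 0) => [->|Mix]; first by rewrite mulr0.
  exfalso.
  have iS' := BS' _ iB.
  have ix : i != x by move: iS'; rewrite in_setD1 => /andP[].
  move: iB; rewrite inE => /connectP[p pp ip].
  case/shortenP: pp ip => p' pp' up' _ ip'.
  have p'n : p' != [::] by apply/eqP => pe; move: iy; rewrite ip' pe eqxx.
  have allS : all (fun v => v \in S') (y :: p') by rewrite /= yS' (pS _ _ pp').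
  have xnp : x \notin y :: p'.
    by apply/negP => /(allP allS); rewrite in_setD1 eqxx.
  have sz : (3 <= size (x :: y :: p'))%N by case: p' p'n {pp' up' ip' allS xnp}.
  have uq : uniq (x :: y :: p') by rewrite cons_uniq xnp up'.
  move/negP: (acyc uq sz); apply.
  rewrite /cycle rcons_cons /= axy /= rcons_path -ip' adjE ix Mix !andbT.
  by apply: sub_path pp' => a b /and3P[].
Qed.

Definition Nset := [set i | g 0 i != 0].
Definition Zg := [set x | (g 0 x == 0) && [exists y, adj x y && (g 0 y != 0)]].

Lemma induct_rank (T0 S0 : {set 'I_n}) : Nset \subset S0 -> T0 \subset Zg ->
  (forall i, i \in T0 -> i \notin S0) ->
  \rank (KS A lam S0) = (\rank (KS A lam (S0 :|: T0)) + #|T0|)%N.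
Proof.
have [k] := ubnP #|T0|; elim: k T0 S0 => // k IH T0 S0 hk hN hZ hd.
case: (set_0Vmem T0) => [->|[x xT]]; first by rewrite setU0 cards0 addn0.
set T1 := T0 :\ x.
have xS0 : x \notin S0 := hd x xT.
have eS : (S0 :|: T0) :\ x = S0 :|: T1.
  apply/setP => i; rewrite !(in_setD1, in_setU).
  by case: (eqVneq i x) => [->|] //=; rewrite (negbTE xS0).
have cT : #|T0| = #|T1|.+1 by rewrite (cardsD1 x T0) xT.
have xZ : x \in Zg by apply: (subsetP hZ).
move: (xZ); rewrite inE => /andP[/eqP gx /existsP[y /andP[axy gy]]].
have gS i : i \notin S0 :|: T0 -> g 0 i = 0.
  move=> iS; apply/eqP; apply: contraNT iS => gi.
  by rewrite in_setU (subsetP hN) // inE.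
have xS : x \in S0 :|: T0 by rewrite in_setU xT orbT.
have yS : y \in S0 :|: T0 by rewrite in_setU (subsetP hN) // inE.
have [w [w1 w2 w3]] := branch gS xS yS axy gx gy.
have hp := parter AT xS w1 w2 w3.
have IH1 := IH T1 S0 _ hN _ _.
rewrite IH1 //.
- by rewrite -eS hp cT; lia.
- by move: hk; rewrite cT.
- by apply: subset_trans hZ; apply: subD1set.
- by move=> i; rewrite in_setD1 => /andP[_]; apply: hd.
Qed.

End Branch.

Lemma cyc_exists (T : finType) (H : rel T) : symmetric H -> irreflexive H ->
  (forall u v, H u v -> exists2 v', v' != v & H u v') ->
  forall u v, H u v -> exists s, [/\ uniq s, (3 <= size s)%N & cycle H s].
Proof.
move=> Hs Hi Hd u v huv.
suff: forall k (l q : T) (p : seq T), (#|T| - size p < k)%N ->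
    uniq (l :: q :: p) -> path H l (q :: p) ->
    exists s, [/\ uniq s, (3 <= size s)%N & cycle H s].
  move=> key; apply: (key #|T|.+1 u v [::]) => //=.
  - by rewrite subn0.
  - by rewrite inE andbT; apply/eqP => e; move: huv; rewrite e Hi.
  - by rewrite huv.
elim=> // k IH l q p hk hu hp.
have hlq : H l q by move: hp => /= /andP[].
have [w wq hlw] := Hd l q hlq.
case: (boolP (w \in l :: q :: p)) => wIn.
  have wl : w != l by apply/eqP => e; move: hlw; rewrite e Hi.
  have wp : w \in p by move: wIn; rewrite !inE (negbTE wl) (negbTE wq).
  case/splitPr: wp hu hp => p1 p2 hu hp.
  exists (l :: q :: rcons p1 w); split.
  - move: hu; have -> : l :: q :: (p1 ++ w :: p2) = (l :: q :: rcons p1 w) ++ p2.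
      by rewrite /= cat_rcons.
    by rewrite cat_uniq => /andP[].
  - by rewrite /= size_rcons.
  - rewrite /cycle rcons_cons /= hlq /= rcons_path last_rcons Hs hlw andbT.
    move: hp; rewrite /= hlq /= -cat_rcons cat_path => /andP[+ _].
    by rewrite -cats1 cat_path /= andbT => /andP[-> ->].
have hu' : uniq (w :: l :: q :: p) by rewrite cons_uniq wIn hu.
have := max_card (mem (w :: l :: q :: p)).
move/card_uniqP: (hu') => -> /= hsz.
apply: (IH w l (q :: p)) => //=.
  by move: hk hsz; rewrite /=; lia.
by rewrite Hs hlw.
Qed.

Section Flow.
Variables (R : realFieldType) (n : nat) (A : 'M[R]_n).
Hypothesis AT : A^T = A.
Hypothesis acyc : mx_acyclic A.
Local Notation adj := (mx_adj A).
Let adj_sym : symmetric adj := @adj_sym R n A 0 AT.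

Lemma flow0 (phi : 'I_n -> 'I_n -> R) : (forall u v, phi u v = - phi v u) ->
  (forall u v, phi u v != 0 -> adj u v) -> (forall u, \sum_v phi u v = 0) ->
  forall u v, phi u v = 0.
Proof.
move=> asy ad sm u v; apply/eqP; apply/negPn/negP => huv.
pose H : rel 'I_n := fun a b => phi a b != 0.
have Hs : symmetric H by move=> a b; rewrite /H asy oppr_eq0.
have Hi : irreflexive H.
  move=> a; rewrite /H; apply/negbTE/negPn/eqP.
  by have := asy a a; move=> e; lra.
have Hd a b : H a b -> exists2 c, c != b & H a c.
  move=> hab.
  case: (boolP [exists c, (c != b) && (phi a c != 0)]) => [/existsP[c /andP[cb hc]]|/existsPn hn].
    by exists c.
  exfalso; move/eqP: hab; apply.
  have := sm a; rewrite (bigD1 b) //= big1 ?addr0 // => c cb.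
  by have := hn c; rewrite cb /= negbK => /eqP.
have [s [us ss cs]] := cyc_exists Hs Hi Hd huv.
have := acyc us ss; move/negP; apply.
by apply: sub_cycle cs => a b; apply: ad.
Qed.

Definition Ed (S : {set 'I_n}) := [set p : 'I_n * 'I_n |
  [&& (p.1 < p.2)%N, adj p.1 p.2, p.1 \in S & p.2 \in S]].
Definition Phi (S : {set 'I_n}) : 'M[R]_(n, #|Ed S|) :=
  \matrix_(i, k) ((i == (enum_val k).1)%:R - (i == (enum_val k).2)%:R).
Definition CS (S : {set 'I_n}) := (Es R S :&: kermx (Phi S))%MS.

Lemma sum_delta (F : 'I_n -> R) a : \sum_i F i * (i == a)%:R = F a.
Proof.
rewrite (bigD1 a) //= eqxx mulr1 big1 ?addr0 // => i /negbTE ->.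
by rewrite mulr0.
Qed.

Lemma Phi_row (S : {set 'I_n}) (h : 'rV[R]_n) k :
  (h *m Phi S) 0 k = h 0 (enum_val k).1 - h 0 (enum_val k).2.
Proof.
rewrite mxE; under eq_bigr => i _ do rewrite mxE mulrBr.
by rewrite sumrB !sum_delta.
Qed.

Lemma CS_supp (S : {set 'I_n}) (h : 'rV[R]_n) : (h <= CS S)%MS -> forall i, i \notin S -> h 0 i = 0.
Proof.
rewrite sub_capmx Es_supp => /andP[/forallP H _] i iS; apply/eqP.
by have /implyP := H i; apply.
Qed.

Lemma CS_edge (S : {set 'I_n}) (h : 'rV[R]_n) : (h <= CS S)%MS ->
  forall u v, u \in S -> v \in S -> adj u v -> h 0 u = h 0 v.
Proof.
rewrite sub_capmx sub_kermx => /andP[_ /eqP hP].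
have key (u v : 'I_n) : (u < v)%N -> u \in S -> v \in S -> adj u v -> h 0 u = h 0 v.
  move=> uv uS vS a.
  have pE : (u, v) \in Ed S by rewrite inE /= uv a uS vS.
  move/rowP: hP => /(_ (enum_rank_in pE (u, v))).
  by rewrite Phi_row enum_rankK_in // mxE => /eqP; rewrite subr_eq0 => /eqP.
move=> u v uS vS a; case: (ltngtP u v) => [uv|vu|uv].
- exact: key.
- by apply/esym/key => //; rewrite adj_sym.
- by rewrite (val_inj uv).
Qed.

Lemma CS_intro (S : {set 'I_n}) (h : 'rV[R]_n) : (forall i, i \notin S -> h 0 i = 0) ->
  (forall u v, u \in S -> v \in S -> adj u v -> h 0 u = h 0 v) ->
  (h <= CS S)%MS.
Proof.
move=> H1 H2; rewrite sub_capmx Es_supp sub_kermx; apply/andP; split.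
  by apply/forallP => i; apply/implyP => /H1 ->.
apply/eqP/rowP => k; rewrite Phi_row mxE.
have := enum_valP k; rewrite inE => /and4P[_ a p1 p2].
by rewrite (H2 _ _ p1 p2 a) subrr.
Qed.

Lemma sum_pair1 (p : 'I_n * 'I_n) a : \sum_b ((p == (a, b))%:R : R) = (p.1 == a)%:R.
Proof.
case: p => p1 p2 /=; case: (eqVneq p1 a) => [->|ne].
  rewrite (bigD1 p2) //= !eqxx big1 ?addr0 // => b bp.
  by rewrite xpair_eqE eqxx /= eq_sym (negbTE bp).
by rewrite big1 // => b _; rewrite xpair_eqE (negbTE ne).
Qed.

Lemma sum_pair2 (p : 'I_n * 'I_n) a : \sum_b ((p == (b, a))%:R : R) = (p.2 == a)%:R.
Proof.
case: p => p1 p2 /=; case: (eqVneq p2 a) => [->|ne].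
  rewrite (bigD1 p1) //= !eqxx big1 ?addr0 // => b bp.
  by rewrite xpair_eqE eq_sym (negbTE bp).
by rewrite big1 // => b _; rewrite xpair_eqE (negbTE ne) andbF.
Qed.

Lemma rank_CS (S : {set 'I_n}) : (\rank (CS S) + #|Ed S|)%N = #|S|.
Proof.
have := mxrank_mul_ker (Es R S) (Phi S); rewrite rank_Es -/(CS S).
suff -> : \rank (Es R S *m Phi S) = #|Ed S| by move=> <-; rewrite addnC.
rewrite -mxrank_tr; apply/eqP.
rewrite -/(row_free _) -kermx_eq0 -submx0; apply/rV_subP => c.
rewrite sub_kermx submx0 trmx_mul mulmxA Et_eq0 => /forallP Hc.
pose phi a b := \sum_k c 0 k * ((enum_val k == (a, b))%:R - (enum_val k == (b, a))%:R).
have asy a b : phi a b = - phi b a.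
  by rewrite /phi -sumrN; apply: eq_bigr => k _; rewrite -mulrN opprB.
have ad a b : phi a b != 0 -> adj a b.
  move=> hne; case: (boolP (adj a b)) => // nab; exfalso; move/eqP: hne; apply.
  apply: big1 => k _; have := enum_valP k; rewrite inE => /and4P[_ ak _ _].
  case: (eqVneq (enum_val k) (a, b)) => [e|ne1].
    by rewrite e /= in ak; rewrite ak in nab.
  case: (eqVneq (enum_val k) (b, a)) => [e|ne2].
    by rewrite e /= adj_sym in ak; rewrite ak in nab.
  by rewrite subrr mulr0.
have sm a : \sum_b phi a b = 0.
  rewrite /phi exchange_big /=.
  transitivity (\sum_k c 0 k * (((enum_val k).1 == a)%:R - ((enum_val k).2 == a)%:R)).
    apply: eq_bigr => k _; rewrite -mulr_sumr sumrB sum_pair1 sum_pair2 //.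
  case: (boolP (a \in S)) => aS.
    have /implyP/(_ aS)/eqP := Hc a; rewrite mxE => H0.
    apply: etrans H0; by apply: eq_bigr => k _; rewrite mxE mxE !(eq_sym a).
  apply: big1 => k _; have := enum_valP k; rewrite inE => /and4P[_ _ p1 p2].
  have n1 : ((enum_val k).1 == a) = false by apply/eqP => e; move: p1; rewrite e (negbTE aS).
  have n2 : ((enum_val k).2 == a) = false by apply/eqP => e; move: p2; rewrite e (negbTE aS).
  by rewrite n1 n2 subrr mulr0.
have phi0 := flow0 asy ad sm.
apply/eqP/rowP => k; rewrite mxE.
have := phi0 (enum_val k).1 (enum_val k).2.
rewrite /phi (bigD1 k) //= big1 ?addr0.
  have -> : (enum_val k == ((enum_val k).1, (enum_val k).2)) by case: (enum_val k).
  have := enum_valP k; rewrite inE => /and4P[lt _ _ _].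
  have -> : (enum_val k == ((enum_val k).2, (enum_val k).1)) = false.
    apply/negbTE; move: lt; case: (enum_val k) => p1 p2 /= lt.
    by rewrite xpair_eqE; apply/negP => /andP[/eqP e _]; rewrite e ltnn in lt.
  by rewrite subr0 mulr1.
move=> k' k'k.
have := enum_valP k'; rewrite inE => /and4P[lt _ _ _].
have -> : (enum_val k' == ((enum_val k).1, (enum_val k).2)) = false.
  have -> : ((enum_val k).1, (enum_val k).2) = enum_val k by case: (enum_val k).
  by rewrite (inj_eq enum_val_inj) (negbTE k'k).
have -> : (enum_val k' == ((enum_val k).2, (enum_val k).1)) = false.
  have := enum_valP k; rewrite inE => /and4P[lt' _ _ _].
  move: lt lt'; case: (enum_val k') => q1 q2; case: (enum_val k) => p1 p2 /= lt lt'.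
  rewrite xpair_eqE; apply/negP => /andP[/eqP e1 /eqP e2].
  by rewrite e1 e2 in lt; have := ltn_trans lt lt'; rewrite ltnn.
by rewrite subrr mulr0.
Qed.

End Flow.

Section Scale.
Variables (R : realFieldType) (n : nat) (A : 'M[R]_n) (lam : R).
Hypothesis AT : A^T = A.
Hypothesis acyc : mx_acyclic A.
Variable g : 'rV[R]_n.
Hypothesis gM : g *m M A lam = 0.
Local Notation M := (M A lam).
Local Notation adj := (mx_adj A).
Let adjE := @adjE R n A lam.
Let Msym := @Msym R n A lam AT.
Local Notation N := (Nset g).

Let g' i := if g 0 i != 0 then g 0 i else 1.
Let g'_neq0 i : g' i != 0.
Proof. by rewrite /g'; case: ifP => // _; exact: oner_neq0. Qed.
Let Dg := diag_mx (\row_i g' i).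

Let Dg_unit : Dg \in unitmx.
Proof.
rewrite unitmxE det_diag unitfE; apply/prodf_neq0 => i _; rewrite mxE.
exact: g'_neq0.
Qed.

Let inN i : (i \in N) = (g 0 i != 0).
Proof. by rewrite inE. Qed.

Let gN i : i \notin N -> g 0 i = 0.
Proof. by rewrite inN negbK => /eqP. Qed.

Let g'N i : i \in N -> g' i = g 0 i.
Proof. by rewrite inN /g' => ->. Qed.

Lemma scale_rank : (\rank (KS A lam N) + #|Ed A N|)%N = #|N|.
Proof.
rewrite -(rank_CS AT acyc N).
suff eq : (KS A lam N :=: CS A N *m Dg)%MS.
  by rewrite eq mxrankMfree // row_free_unit.
apply/eqmxP/andP; split; apply/rV_subP => h.
  move=> hK.
  set h' : 'rV[R]_n := \row_i (h 0 i / g' i).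
  have hh : h = h' *m Dg by apply/rowP => i; rewrite mul_mx_diag !mxE divfK.
  rewrite hh submxMr //.
  have hN b : b \in N -> h 0 b = h' 0 b * g 0 b.
    by move=> bN; rewrite mxE -g'N // divfK.
  have hN0 b : b \notin N -> h 0 b = 0 by move=> bN; exact: (KS_supp hK bN).
  apply: CS_intro => [i iN|u v uN vN auv]; first by rewrite mxE hN0 ?mul0r.
  pose phi a b := if (a \in N) && (b \in N) then M a b * g 0 a * g 0 b * (h' 0 a - h' 0 b) else 0.
  have asy a b : phi a b = - phi b a.
    rewrite /phi andbC; case: ifP => _; last by rewrite oppr0.
    by rewrite Msym; ring.
  have ad a b : phi a b != 0 -> adj a b.
    rewrite /phi; case: ifP => _; last by rewrite eqxx.
    rewrite !mulf_eq0 !negb_or => /andP[/andP[/andP[Mab _] _] hab].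
    rewrite adjE Mab andbT; apply/eqP => e; move: hab; rewrite e subrr eqxx.
    by [].
  have sm a : \sum_b phi a b = 0.
    case: (boolP (a \in N)) => aN; last first.
      by apply: big1 => b _; rewrite /phi (negbTE aN).
    have ter b : phi a b = g 0 a * (h' 0 a * (g 0 b * M b a) - h 0 b * M b a).
      rewrite /phi aN /=; case: (boolP (b \in N)) => bN.
        by rewrite hN // Msym; ring.
      by rewrite (gN bN) (hN0 _ bN); ring.
    rewrite (eq_bigr _ (fun b _ => ter b)) -mulr_sumr sumrB -mulr_sumr gM0 //.
    have := KS_ker hK aN; rewrite mxE => ->.
    by rewrite mulr0 subr0 mulr0.
  have := flow0 acyc asy ad sm u v; rewrite /phi uN vN /=.
  move/eqP; rewrite !mulf_eq0 -!orbA => /or4P[| | |].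
  - by move: auv; rewrite adjE => /andP[_ /negbTE ->].
  - by move: uN; rewrite inN => /negbTE ->.
  - by move: vN; rewrite inN => /negbTE ->.
  - by rewrite subr_eq0 => /eqP.
move/submxP => [D ->]; rewrite mulmxA.
have : (D *m CS A N <= CS A N)%MS by apply: submxMl.
move: (D *m CS A N) => v vC.
apply: KS_intro => [i iN|u uN].
  by rewrite mul_mx_diag mxE (CS_supp vC) ?mul0r.
rewrite mxE.
transitivity (v 0 u * \sum_b g 0 b * M b u); last by rewrite gM0 // mulr0.
have vD b : (v *m Dg) 0 b = v 0 b * g' b by rewrite mul_mx_diag !mxE.
rewrite mulr_sumr; apply: eq_bigr => b _; rewrite vD.
case: (boolP (b \in N)) => bN; last by rewrite (CS_supp vC) // gN // !(mul0r, mulr0).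
rewrite g'N //; case: (eqVneq b u) => [->|bu]; first by rewrite mulrA.
case: (eqVneq (M b u) 0) => [->|Mbu]; first by rewrite !mulr0.
rewrite (CS_edge AT vC bN uN) ?adjE ?bu ?Mbu //; ring.
Qed.

End Scale.

Section Comp.
Variables (R : realFieldType) (n : nat) (A : 'M[R]_n).
Hypothesis AT : A^T = A.
Local Notation adj := (mx_adj A).
Let adj_sym : symmetric adj := @adj_sym R n A 0 AT.
Let csym := sym_connect_sym adj_sym.

Lemma comp_rank : n_comp adj predT = \rank (CS A setT).
Proof.
set Rt := [set x | roots adj x].
have -> : n_comp adj predT = #|Rt| by apply: eq_card => x; rewrite !inE andbT.
pose psi : 'M[R]_(#|Rt|, n) := \matrix_(k, i) (fingraph.root adj i == enum_val k)%:R.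
have rootv (l : 'I_#|Rt|) : fingraph.root adj (enum_val l) = enum_val l.
  by have := enum_valP l; rewrite inE => /eqP.
have pE : psi *m (Es R Rt)^T = 1%:M.
  apply/matrixP => k l; rewrite !mxE (bigD1 (enum_val l)) //= big1 => [|i ne].
    by rewrite !mxE eqxx mulr1 addr0 rootv (inj_eq enum_val_inj) eq_sym.
  by rewrite !mxE (eq_sym (enum_val l)) (negbTE ne) mulr0.
have rpsi : \rank psi = #|Rt|.
  apply/eqP; rewrite eqn_leq rank_leq_row /=.
  by have := mxrankM_maxl psi (Es R Rt)^T; rewrite pE mxrank1.
suff eq : (psi :=: CS A setT)%MS by rewrite -eq rpsi.
apply/eqmxP/andP; split.
  apply/row_subP => k; apply: CS_intro => [i|u v _ _ auv]; first by rewrite in_setT.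
  rewrite !mxE; have -> // : fingraph.root adj u = fingraph.root adj v.
  by apply/(fingraph.rootP csym); exact: connect1.
apply/rV_subP => h hC; apply/submxP; exists (\row_k h 0 (enum_val k)).
apply/rowP => i; rewrite !mxE.
rewrite (eq_bigr (fun k => (fun x => h 0 x * (fingraph.root adj i == x)%:R) (enum_val k))); last first.
  by move=> k _; rewrite !mxE.
rewrite (sum_enum_val Rt (fun x => h 0 x * (fingraph.root adj i == x)%:R)).
rewrite (bigD1 (fingraph.root adj i)) /=; last by rewrite inE roots_root.
rewrite eqxx mulr1 big1 ?addr0; last first.
  by move=> x /andP[_ ne]; rewrite eq_sym (negbTE ne) mulr0.
have hc x y : connect adj x y -> h 0 x = h 0 y.
  case/connectP => p pp ->; elim: p x pp => //= a p IH x /andP[xa pp].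
  by rewrite (CS_edge AT hC (in_setT x) (in_setT a) xa); apply: IH.
by apply: hc; apply: connect_root.
Qed.

End Comp.

Lemma EsMEt (R : fieldType) n (S : {set 'I_n}) (B : 'M[R]_n) k l :
  (Es R S *m B *m (Es R S)^T) k l = B (enum_val k) (enum_val l).
Proof.
rewrite mxE (bigD1 (enum_val l)) //= big1 => [|i ne].
  rewrite !mxE eqxx mulr1 addr0 (bigD1 (enum_val k)) //= big1 => [|j ne].
    by rewrite !mxE eqxx mul1r addr0.
  by rewrite !mxE (eq_sym (enum_val k)) (negbTE ne) mul0r.
by rewrite [(Es R S)^T i l]mxE [Es R S l i]mxE (eq_sym (enum_val l)) (negbTE ne) mulr0.
Qed.

Lemma rank_del (R : realFieldType) n (A : 'M[R]_n) lam (S : {set 'I_n}) :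
  \rank (kermx (Es R S *m M A lam *m (Es R S)^T)) = \rank (KS A lam S).
Proof.
rewrite -(mxrankMfree _ (Es_free R S)).
apply/eqmx_rank/andP; split.
  rewrite sub_capmx submxMl sub_kermx -mulmxA mulmxA.
  by have /eqP := mulmx_ker (Es R S *m M A lam *m (Es R S)^T); rewrite !mulmxA => ->.
apply/rV_subP => h; rewrite sub_capmx sub_kermx => /andP[/submxP[D ->] hM].
apply: submxMr; rewrite sub_kermx.
by move: hM; rewrite !mulmxA.
Qed.

Lemma rank_full (R : realFieldType) n (A : 'M[R]_n) lam :
  \rank (kermx (M A lam)) = \rank (KS A lam setT).
Proof.
apply/eqmx_rank/andP; split; apply/rV_subP => h.
  rewrite sub_kermx => /eqP hM; apply: KS_intro => [i|u _]; first by rewrite in_setT.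
  by rewrite hM mxE.
move=> hK; rewrite sub_kermx; apply/eqP/rowP => u.
by rewrite (KS_ker hK) ?in_setT // mxE.
Qed.

Lemma arith1 (a b c d z : nat) : a = (b + z)%N -> c = (d + z)%N -> (a <= c)%N -> (b <= d)%N.
Proof. lia. Qed.

Lemma arith2 (rt rkN Zc EdN Nc c EdT n e0 z Fc : nat) :
  rkN = (rt + Zc)%N -> (rkN + EdN)%N = Nc -> (c + EdT)%N = n ->
  EdT = (EdN + e0)%N -> z = (Zc + Fc)%N -> n = (Nc + z)%N ->
  (rt%:Z = e0%:Z - 2 * z%:Z + c%:Z + Fc%:Z)%R.
Proof. lia. Qed.

Unset Implicit Arguments.

Theorem corollary5p4 (R : rcfType) (n : nat) (A : 'M[R]_n) (lam : R)
    (f : 'cV[R]_n) :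
  A^T = A ->
  mx_acyclic A ->
  f != 0 -> A *m f = lam *: f ->
  let F := zero_nbhd_set A f in
  let r := eig_mult A lam in
  let rt := eig_mult (del_rowcol A F) lam in
  (rt <= r)%N /\
  (rt%:Z = (zero_edge_count A f)%:Z - 2 * (zero_count f)%:Z
           + (comp_count A)%:Z + #|F|%:Z)%R.
Proof.
move=> AT acyc _ Af F r rt.
pose g : 'rV[R]_n := f^T.
have gE i : g 0 i = f i 0 by rewrite mxE.
have gM : g *m M A lam = 0.
  have <- : (M A lam *m f)^T = g *m M A lam by rewrite trmx_mul (@MT _ _ A lam AT).
  by rewrite /M mulmxBl Af mul_scalar_mx subrr trmx0.
set N := Nset g.
set Z := Zg A g.
have fa x : [forall y, mx_adj A x y ==> (g 0 y == 0)] =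
            ~~ [exists y, mx_adj A x y && (g 0 y != 0)].
  by rewrite negb_exists; apply/eq_forallb => y; rewrite negb_and negbK implybE.
have inF x : (x \in F) = (g 0 x == 0) && ~~ [exists y, mx_adj A x y && (g 0 y != 0)].
  rewrite /F /zero_nbhd_set inE -fa gE; congr andb.
  by apply: eq_forallb => y; rewrite gE.
have inZ x : (x \in Z) = (g 0 x == 0) && [exists y, mx_adj A x y && (g 0 y != 0)].
  by rewrite inE.
have inN x : (x \in N) = (g 0 x != 0) by rewrite inE.
have WE : ~: F = N :|: Z.
  apply/setP => x; rewrite in_setC in_setU inF inZ inN.
  by case: (g 0 x == 0); case: [exists _, _].
have TE : (N :|: F) :|: Z = setT.
  apply/setP => x; rewrite !in_setU inF inZ inN in_setT.
  by case: (g 0 x == 0); case: [exists _, _].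
have d1 i : i \in Z -> i \notin N by rewrite inZ inN negbK => /andP[].
have d2 i : i \in Z -> i \notin N :|: F.
  by rewrite in_setU inZ inN inF negb_or negbK; case: (g 0 i == 0); case: [exists _, _].
have i1 := induct_rank AT acyc gM (T0 := Z) (S0 := N) (subxx _) (subxx _) d1.
have i2 := induct_rank AT acyc gM (T0 := Z) (S0 := N :|: F) (subsetUl _ _) (subxx _) d2.
have i3 : (\rank (KS A lam N) <= \rank (KS A lam (N :|: F)))%N.
  apply: mxrankS; apply/rV_subP => h hK; apply: KS_intro => [i|u].
    by rewrite in_setU negb_or => /andP[iN _]; apply: (KS_supp hK).
  rewrite in_setU => /orP[uN|uF]; first exact: (KS_ker hK).
  rewrite mxE big1 // => i _.
  case: (boolP (i \in N)) => iN; last by rewrite (KS_supp hK iN) mul0r.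
  case: (eqVneq (M A lam i u) 0) => [->|Miu]; first by rewrite mulr0.
  exfalso; move: uF; rewrite inF => /andP[/eqP gu]; rewrite -fa.
  move/forallP/(_ i); rewrite (@adj_sym _ _ A lam AT) (@adjE _ _ A lam) Miu andbT.
  have -> : i != u by apply/eqP => e; move: iN; rewrite inN e gu eqxx.
  by move: iN; rewrite inN => /negbTE ->.
have i4 := scale_rank AT acyc gM; rewrite -/N in i4.
have i5 := rank_CS AT acyc setT.
rewrite cardsT card_ord in i5.
have i5' : comp_count A = \rank (CS A setT) by rewrite /comp_count comp_rank.
have i6 : #|Ed A setT| = (#|Ed A N| + zero_edge_count A f)%N.
  set B := [set p : 'I_n * 'I_n | (p.1 \in N) && (p.2 \in N)].
  have E1 : Ed A setT :&: B = Ed A N.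
    apply/setP => p; rewrite !inE.
    by rewrite !andbT; case: (p.1 < p.2)%N; case: (mx_adj A p.1 p.2).
  have E2 : Ed A setT :\: B = [set p : 'I_n * 'I_n | [&& (p.1 < p.2)%N, mx_adj A p.1 p.2 &
                                (f p.1 0 == 0) || (f p.2 0 == 0)]].
    apply/setP => p; rewrite !inE !gE.
    rewrite !andbT; case: (p.1 < p.2)%N; case: (mx_adj A p.1 p.2);
      by rewrite /= ?andbF // andbT negb_and !negbK.
  by rewrite /zero_edge_count -E1 -E2 cardsID.
have i7 : zero_count f = (#|Z| + #|F|)%N.
  rewrite /zero_count -(cardsID Z).
  have E1 : [set x | f x 0 == 0] :&: Z = Z.
    apply/setP => x; rewrite in_setI inZ inE -gE.
    by case: (g 0 x == 0); case: [exists _, _].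
  have E2 : [set x | f x 0 == 0] :\: Z = F.
    apply/setP => x; rewrite in_setD inZ inF inE -gE.
    by case: (g 0 x == 0); case: [exists _, _].
  by rewrite E1 E2.
have i8 : n = (#|N| + zero_count f)%N.
  rewrite /zero_count.
  have E : ~: N = [set x | f x 0 == 0].
    by apply/setP => x; rewrite in_setC inN !inE gE negbK.
  by rewrite -E cardsC card_ord.
have hrt : rt = \rank (KS A lam (N :|: Z)).
  rewrite /rt eig_mult_sym; last first.
    by apply/matrixP => k l; rewrite !mxE -{1}AT mxE.
  have -> : del_rowcol A F - lam%:M = Es R (~: F) *m M A lam *m (Es R (~: F))^T.
    by apply/matrixP => k l; rewrite EsMEt /M !mxE (inj_eq enum_val_inj).
  by rewrite rank_del WE.
have hr : r = \rank (KS A lam setT).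
  by rewrite /r eig_mult_sym //; exact: rank_full.
rewrite -TE in hr.
have {i1}i1 : (_ = _ :> nat) := i1. have {i2}i2 : (_ = _ :> nat) := i2.
have {i4}i4 : (_ = _ :> nat) := i4. have {i5}i5 : (_ = _ :> nat) := i5.
have {i5'}i5' : (_ = _ :> nat) := i5'. have {i6}i6 : (_ = _ :> nat) := i6.
have {i7}i7 : (_ = _ :> nat) := i7. have {i8}i8 : (_ = _ :> nat) := i8.
have {hrt}hrt : (_ = _ :> nat) := hrt. have {hr}hr : (_ = _ :> nat) := hr.
split.
  rewrite hrt hr; exact: (arith1 i1 i2 i3).
rewrite i5' -/(zero_count f) -/(zero_edge_count A f).
apply: (arith2 (rkN := \rank (KS A lam N)) _ i4 i5 i6 i7 i8).
by rewrite i1 hrt.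
Qed.
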